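(* For every $0<\alpha<1$, the Marcinkiewicz space $M_\alpha$ of measurable functions $f$ on $(0,\infty)$ with $\|f\|_{M_\alpha}=\sup_{t>0}t^{\alpha-1}\int_0^t f^*(u)\,du<\infty$ does not belong to the class $\mathcal X$.
   Context: $f^*$ denotes the nonincreasing rearrangement. A pair $(f,g)$ satisfies the NP condition if there is $t_0>0$ with $f^*(t)\ge g^*(t)$ for $t\le t_0$ and $f^*(t)\le g^*(t)$ for $t\ge t_0$. $\mathcal X$ is the class of all rearrangement invariant spaces $X$ on $(0,\infty)$ such that for every pair $(f,g)$ with $f,g\in X$ satisfying the NP condition and $\|f\|_X\ge\|g\|_X$, one has $\|f^*\chi_{(0,s)}\|_X\ge\|g^*\chi_{(0,s)}\|_X$ for all $s>0$. *)

(* Defs.v *)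
From HB Require Import structures.
From mathcomp Require Import all_boot all_order all_algebra.
From mathcomp Require Import all_classical all_reals all_analysis.
Set Implicit Arguments. Unset Strict Implicit. Unset Printing Implicit Defensive.
Import Order.TTheory GRing.Theory Num.Theory.
Local Open Scope classical_set_scope.
Local Open Scope ring_scope.

Section Defs.
Variable R : realType.
Local Notation mu := (@lebesgue_measure R).

Definition distrib (f : R -> R) (l : R) : \bar R :=
  mu ([set x | 0 < x] `&` [set x | l < `|f x|]).

(* nonincreasing rearrangement f^*(t) = inf {l >= 0 : d_f(l) <= t}
   (extended-real valued; +oo when the set is empty) *)
Definition rearr (f : R -> R) (t : R) : \bar R :=
  ereal_inf [set l%:E | l in [set l : R | 0 <= l /\ (distrib f l <= t%:E)%E]].

Definition normM (alpha : R) (f : R -> R) : \bar R :=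
  ereal_sup [set ((t `^ (alpha - 1))%:E * \int[mu]_(u in [set` `]0%R, t]]) rearr f u)%E
            | t in [set t : R | 0 < t]].

Definition inM (alpha : R) (f : R -> R) : Prop :=
  measurable_fun [set x : R | 0 < x] f /\ (normM alpha f < +oo)%E.

Definition NP (f g : R -> R) : Prop :=
  exists t0 : R, 0 < t0 /\
    (forall t, 0 < t -> t <= t0 -> (rearr g t <= rearr f t)%E) /\
    (forall t, t0 <= t -> (rearr f t <= rearr g t)%E).

(* the function f^* chi_(0,s) (f^* is finite on (0,oo) for f in M_alpha) *)
Definition trunc_rearr (f : R -> R) (s : R) : R -> R :=
  fun u => if (0 < u) && (u < s) then fine (rearr f u) else 0.

Definition M_in_X (alpha : R) : Prop :=
  forall f g : R -> R, inM alpha f -> inM alpha g -> NP f g ->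
    (normM alpha g <= normM alpha f)%E ->
    forall s : R, 0 < s ->
      (normM alpha (trunc_rearr g s) <= normM alpha (trunc_rearr f s))%E.
End Defs.

(* Main.v *)
Require Import Defs.
From HB Require Import structures.
From mathcomp Require Import all_boot all_order all_algebra.
From mathcomp Require Import all_classical all_reals all_analysis.
From mathcomp Require Import measurable_realfun.
From mathcomp Require Import ring lra.
Import Order.TTheory GRing.Theory Num.Theory numFieldNormedType.Exports.
Set Implicit Arguments. Unset Strict Implicit.
Local Open Scope classical_set_scope.
Local Open Scope ring_scope.

Section Gen.
Variable R : realType.
Local Notation mu := (@lebesgue_measure R).

Lemma lm_le (A B : set R) : A `<=` B -> (mu A <= mu B)%E.
Proof.
move=> AB. rewrite /lebesgue_measure /lebesgue_stieltjes_measure /=.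
by apply: le_outer_measure.
Qed.

Lemma lm_oo (t : R) : 0 <= t -> mu `]0, t[ = t%:E.
Proof. move=> t0; rewrite lebesgue_measure_itv/=. case: ifPn; rewrite lte_fin.
 by move=> _; rewrite sube0.
by rewrite -leNgt => ?; apply/eqP; rewrite eq_sym eqe eq_le t0 andbT. Qed.

Lemma powR_cont (p t : R) : 0 < t -> {for t, continuous (@powR R ^~ p)}.
Proof.
move=> t0; apply: differentiable_continuous; apply/derivable1_diffP.
by apply: derivable_powR; rewrite in_itv /= t0.
Qed.

Lemma cont_rc (h : R -> R) t : {for t, continuous h} ->
  forall l, l < h t -> exists2 t', t < t' & l < h t'.
Proof.
move=> ch l lt; have N := @cvgr_gt R R (nbhs t) _ h (h t) ch l lt.
have [e /= e0 H] := (nbhs_ballP _ _).1 (N _); exists (t + e / 2).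
  by rewrite ltrDl divr_gt0.
apply: H; rewrite /ball /= opprD addrA subrr sub0r normrN ger0_norm ?divr_ge0 ?ltW//.
by rewrite ltr_pdivrMr// ltr_pMr// ltr1n.
Qed.

Definition RC (h : R -> R) t := forall l, 0 <= l -> l < h t -> exists2 t', t < t' & l < h t'.

Lemma rearr_ext (h1 h2 : R -> R) : (forall x, 0 < x -> h1 x = h2 x) -> rearr h1 = rearr h2.
Proof.
move=> E; apply: funext => t; rewrite /rearr /distrib.
congr ereal_inf; apply/seteqP; split => _ [l [l0 dl] <-]; exists l => //; split => //;
  (apply: le_trans dl; apply: lm_le => x [/= x0 hx]; split => //=).
  by rewrite E.
by rewrite -E.
Qed.

Lemma normM_ext al (h1 h2 : R -> R) : (forall x, 0 < x -> h1 x = h2 x) ->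
  normM al h1 = normM al h2.
Proof. by move=> E; rewrite /normM (rearr_ext E). Qed.

Lemma rearr_dec (h : R -> R) t : 0 < t -> (forall x y, x <= y -> h y <= h x) ->
  (forall x, 0 <= h x) -> RC h t -> rearr h t = (h t)%:E.
Proof.
move=> t0 hd h0 rc; rewrite /rearr; apply/eqP; rewrite eq_le; apply/andP; split.
  apply: ereal_inf_lbound; exists (h t) => //; split; first exact: h0.
  rewrite /distrib -(lm_oo (ltW t0)); apply: lm_le => x [/= x0].
  rewrite ger0_norm // => hx; rewrite /= in_itv /= x0 /=.
  by rewrite ltNge; apply/negP => /hd; rewrite leNgt hx.
apply: le_ereal_inf_tmp => _ [l [l0 dl] <-]; rewrite lee_fin leNgt; apply/negP => lt.
have [t' tt' lt'] := rc l l0 lt.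
have : ((t'%:E) <= (t%:E))%E.
  apply: le_trans dl; rewrite /distrib -(lm_oo (ltW (lt_trans t0 tt'))).
  apply: lm_le => x; rewrite /= in_itv /= => /andP[x0 xt]; split => //=.
  by rewrite ger0_norm //; apply: lt_le_trans lt' (hd _ _ (ltW xt)).
by rewrite lee_fin leNgt tt'.
Qed.


Lemma meas_h (h : R -> R) (D : set R) : measurable D ->
  (forall x y, x <= y -> h y <= h x) -> measurable_fun D (fun x => (h x)%:E).
Proof. by move=> mD hd; apply/measurable_EFinP; apply: nonincreasing_measurable => // x y /hd. Qed.

Lemma int_split (h : R -> R) (s t : R) : 0 <= s -> s <= t ->
  (forall x y, x <= y -> h y <= h x) -> (forall x, 0 <= h x) ->
  (\int[mu]_(u in `]0%R, t]) (h u)%:E =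
   \int[mu]_(u in `]0%R, s]) (h u)%:E + \int[mu]_(u in `]s, t]) (h u)%:E)%E.
Proof.
move=> s0 st hd h0.
have -> : [set` `]0%R, t]] = [set` `]0%R, s]] `|` [set` `]s, t]] :> set R.
  apply/seteqP; split => u /=; rewrite !in_itv /=.
    by case/andP => u0 ut; case: (leP u s) => us; [left|right]; rewrite ?u0 ?us ?ut.
  by case => /andP[a b]; apply/andP; split => //;
    [apply: le_trans b st | apply: le_lt_trans s0 a].
rewrite ge0_integral_setU //=.
- by apply: meas_h => //; apply: measurableU.
- by move=> u _; rewrite lee_fin.
- rewrite disj_set2E; apply/eqP/seteqP; split => u //=; rewrite !in_itv /=.
  by case=> /andP[_ us] /andP[su _]; move: (lt_le_trans su us); rewrite ltxx.
Qed.

Lemma int_const (h : R -> R) (k x y : R) : x <= y ->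
  (forall x y, x <= y -> h y <= h x) ->
  (forall u, x < u < y -> h u = k) ->
  (\int[mu]_(u in `]x, y]) (h u)%:E = (k * (y - x))%:E)%E.
Proof.
move=> xy hd hk.
rewrite -integral_itv_bndo_bndc; last by apply: meas_h.
rewrite (eq_integral (fun=> k%:E)); last first.
  by move=> u; rewrite inE /= => uin; rewrite hk.
rewrite integral_cst //= lebesgue_measure_itv /= lte_fin.
case: ifPn => [_|]; first by rewrite -EFinD -EFinM.
rewrite -leNgt => yx; have -> : y = x by apply/eqP; rewrite eq_le yx xy.
by rewrite subrr mulr0 mule0.
Qed.

Lemma int_rearr (h : R -> R) (t : R) : (forall x y, x <= y -> h y <= h x) ->
  (forall x, 0 <= h x) -> (forall u, 0 < u -> RC h u) ->
  (\int[mu]_(u in [set` `]0%R, t]]) rearr h u = \int[mu]_(u in `]0%R, t]) (h u)%:E)%E.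
Proof.
move=> hd h0 rc; apply: eq_integral => u; rewrite inE /= in_itv /= => /andP[u0 _].
exact: (rearr_dec u0 hd h0 (rc u u0)).
Qed.

Lemma int_eq_itv (h1 h2 : R -> R) (x y : R) : (forall u, x < u <= y -> h1 u = h2 u) ->
  (\int[mu]_(u in `]x, y]) (h1 u)%:E = \int[mu]_(u in `]x, y]) (h2 u)%:E)%E.
Proof.
by move=> E; apply: eq_integral => u; rewrite inE /= in_itv /= => /E ->.
Qed.

End Gen.

Section Bern.
Variable R : realType.
Local Open Scope convex_scope.
Lemma bern_weak (x b : R) : 0 < x -> 0 <= b -> b <= 1 -> x `^ b <= 1 + b * (x - 1).
Proof.
move=> x0 b0 b1.
have := concave_ln (Itv01 b0 b1) x0 (ltr01 : (0:R) < 1).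
rewrite !convRE /= ln1 mulr0 addr0 => H.
rewrite /powR gt_eqF // mulrC.
have -> : 1 + b * (x - 1) = b * x + (1 - b) * 1 by ring.
rewrite -[X in _ <= X]lnK; last first.
  rewrite posrE; have := @convR_gt0 R x 1 (Itv01 b0 b1) x0 ltr01.
  by rewrite convRE.
by rewrite ler_expR mulrC; exact: H.
Qed.
Local Close Scope convex_scope.

Lemma bern_strict (c a : R) : 1 < c -> 0 < a -> a < 1 -> c `^ a < 1 + a * (c - 1).
Proof.
move=> c1 a0 a1; set s := Num.sqrt c.
have cs : c = s * s by rewrite -expr2 sqr_sqrtr // ltW // (lt_trans ltr01).
have s1 : 1 < s by rewrite -sqrtr1 ltr_sqrt // (lt_trans ltr01).
have s0 : 0 <= s by apply: le_trans (ltW s1).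
rewrite cs powRM //.
have hb := bern_weak (lt_le_trans ltr01 (ltW s1)) (ltW a0) (ltW a1).
have hp := powR_ge0 s a.
apply: (le_lt_trans (y := (1 + a * (s - 1)) * (1 + a * (s - 1)))).
  by apply: ler_pM.
have : 0 < a * (1 - a) * ((s - 1) * (s - 1)).
  by rewrite !mulr_gt0 // subr_gt0.
lra.
Qed.
End Bern.

Section Pow.
Variable R : realType.
Local Notation mu := (@lebesgue_measure R).
Variable al : R.
Hypothesis al0 : 0 < al.
Hypothesis al1 : al < 1.

Lemma int_pow (x y : R) : 0 < x -> x <= y ->
  (\int[mu]_(u in `]x, y]) (u `^ (- al))%:E =
   (((y `^ (1 - al)) - x `^ (1 - al)) / (1 - al))%:E)%E.
Proof.
move=> x0; rewrite le_eqVlt => /orP[/eqP <-|xy].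
  rewrite set_itv_ge; last by rewrite bnd_simp ltxx.
  by rewrite integral_set0 subrr mul0r.
have a0 : 0 < 1 - al by rewrite subr_gt0.
have mp : measurable_fun setT (EFin \o (@powR R ^~ (- al))).
  by apply/measurable_EFinP; apply: measurable_powR.
rewrite integral_itv_obnd_cbnd; last exact: measurable_funTS.
have E := @continuous_FTC2 R (fun u => (1 - al) * u `^ (- al)) (@powR R ^~ (1 - al)) x y xy.
transitivity (\int[mu]_(u in `[x, y]) (((1 - al)^-1)%:E * ((1 - al) * u `^ (- al))%:E))%E.
  by apply: eq_integral => u _; rewrite -EFinM mulrA mulVf ?mul1r // gt_eqF.
rewrite ge0_integralZl_EFin //; last 3 first.
- by move=> u _; rewrite lee_fin mulr_ge0 ?powR_ge0 // ltW.
- apply/measurable_EFinP.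
  have H : measurable_fun setT (fun u : R => (1 - al) * u `^ (- al)).
    by apply: measurable_funM => //; exact: measurable_powR.
  exact: measurable_funTS H.
- by rewrite invr_ge0 ltW.
rewrite E.
- by rewrite -EFinB -EFinM mulrC.
- apply: continuous_in_subspaceT => u /set_mem; rewrite /= in_itv /= => /andP[xu _].
  apply: cvgM; first exact: cvg_cst.
  by apply: powR_cont; apply: lt_le_trans xu.
- split.
  + move=> u; rewrite in_itv /= => /andP[xu _]; apply: derivable_powR.
    by rewrite in_itv /= andbT; apply: lt_trans xu.
  + by apply: cvg_at_right_filter; apply: powR_cont.
  + by apply: cvg_at_left_filter; apply: powR_cont; apply: lt_trans xy.
- move=> u; rewrite in_itv /= => /andP[xu _].
  rewrite powR_derive1; last by rewrite in_itv /= andbT; apply: lt_trans xu.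
  by congr (_ * _); congr (_ `^ _); rewrite addrAC subrr sub0r.
Qed.

End Pow.

Section Main.
Variable R : realType.
Local Notation mu := (@lebesgue_measure R).
Variable al : R.
Hypothesis al0 : 0 < al.
Hypothesis al1 : al < 1.

Let a := 1 - al.
Let ia := a^-1.
Lemma a_gt0 : 0 < a. Proof. by rewrite subr_gt0. Qed.
Lemma a_lt1 : a < 1. Proof. by rewrite /a ltrBlDr ltrDl. Qed.
Lemma ia_gt1 : 1 < ia. Proof. by rewrite /ia invf_gt1 ?a_gt0 ?a_lt1. Qed.
Lemma ia_pos : 0 < ia. Proof. by rewrite /ia invr_gt0 a_gt0. Qed.
Lemma a_ia : a * ia = 1. Proof. by rewrite /ia mulfV // gt_eqF // a_gt0. Qed.

Definition m := (1 + ia) / 2.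
Lemma m_gt1 : 1 < m. Proof. have := ia_gt1. rewrite /m; lra. Qed.
Lemma m_lt : m < ia. Proof. have := ia_gt1. rewrite /m; lra. Qed.
Definition c := m `^ (al^-1).
Lemma c_ge_m : m <= c.
Proof.
apply: le1r_powR; first exact: ltW m_gt1.
by rewrite invf_ge1 // ltW.
Qed.
Lemma c_gt1 : 1 < c. Proof. exact: lt_le_trans m_gt1 c_ge_m. Qed.
Lemma c_gt0 : 0 < c. Proof. exact: lt_trans ltr01 c_gt1. Qed.
Lemma cal : c `^ al = m.
Proof. by rewrite /c -powRrM mulVf ?gt_eqF // powRr1 // ltW // (lt_trans ltr01 m_gt1). Qed.
Definition ca := c `^ a.
Lemma caE : ca = c `^ (1 - al). Proof. by []. Qed.
Lemma ca_gt0 : 0 < ca. Proof. by rewrite /ca powR_gt0 // c_gt0. Qed.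
Lemma cE : c = ca * m.
Proof.
rewrite -cal /ca -powRD; last by rewrite /a subrK oner_eq0.
by rewrite /a subrK powRr1 // ltW // c_gt0.
Qed.

Lemma pow_dec (x y : R) : 0 < x -> x <= y -> y `^ (- al) <= x `^ (- al).
Proof.
move=> x0 xy; rewrite !powRN lef_pV2 ?posrE ?powR_gt0 //; last exact: lt_le_trans xy.
by apply: ge0_ler_powR => //; [exact: ltW | rewrite nnegrE ltW // | rewrite nnegrE ltW // (lt_le_trans x0)].
Qed.

Lemma pow_le1 (y : R) : 1 <= y -> y `^ (- al) <= 1.
Proof.
move=> y1; apply: le_trans (pow_dec ltr01 y1) _.
by rewrite powR1.
Qed.

Lemma tpow (t : R) : 0 < t -> t `^ (al - 1) = (t `^ a)^-1.
Proof. by move=> t0; rewrite -powRN /a opprB. Qed.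

Lemma tpow_t (t : R) : 0 < t -> t `^ (al - 1) * t = t `^ al.
Proof. by move=> t0; rewrite mulrC mulr_powRB1 // ltW. Qed.

Definition fF (x : R) := if x <= 1 then 1 else x `^ (- al).
Definition gF (x : R) := if x < c then 1 else x `^ (- al).
Definition tf (x : R) := if x < c then fF x else 0.
Definition tg (x : R) := if x < c then (1:R) else 0.

Lemma fF_ge0 x : 0 <= fF x. Proof. by rewrite /fF; case: ifP => // _; rewrite powR_ge0. Qed.
Lemma gF_ge0 x : 0 <= gF x. Proof. by rewrite /gF; case: ifP => // _; rewrite powR_ge0. Qed.
Lemma tf_ge0 x : 0 <= tf x. Proof. by rewrite /tf; case: ifP => // _; rewrite fF_ge0. Qed.
Lemma tg_ge0 x : 0 <= tg x. Proof. by rewrite /tg; case: ifP. Qed.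

Lemma fF_dec x y : x <= y -> fF y <= fF x.
Proof.
move=> xy; rewrite /fF; case: ifPn => y1; case: ifPn => x1 //.
- by move: x1; rewrite -ltNge => /lt_le_trans /(_ (le_trans xy y1)); rewrite ltxx.
- by apply: pow_le1; rewrite ltW // ltNge.
- by apply: pow_dec => //; apply: lt_trans ltr01 _; rewrite ltNge.
Qed.

Lemma gF_dec x y : x <= y -> gF y <= gF x.
Proof.
move=> xy; rewrite /gF; case: ifPn => y1; case: ifPn => x1 //.
- by move: x1; rewrite -leNgt => /le_lt_trans /(_ (le_lt_trans xy y1)); rewrite ltxx.
- by apply: pow_le1; rewrite (le_trans (ltW c_gt1)) // leNgt.
- by apply: pow_dec => //; apply: lt_le_trans c_gt0 _; rewrite leNgt.
Qed.

Lemma tf_dec x y : x <= y -> tf y <= tf x.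
Proof.
move=> xy; rewrite /tf; case: ifPn => y1; last by rewrite tf_ge0.
by rewrite (le_lt_trans xy y1) fF_dec.
Qed.

Lemma tg_dec x y : x <= y -> tg y <= tg x.
Proof.
move=> xy; rewrite /tg; case: ifPn => y1; last by rewrite tg_ge0.
by rewrite (le_lt_trans xy y1).
Qed.

Lemma fF_RC t : 0 < t -> RC fF t.
Proof.
move=> t0 l l0; case: (ltP t 1) => t1.
  have ft : fF t = 1 by rewrite /fF ifT // ltW.
  rewrite ft => lt; exists 1; first done.
  by rewrite /fF lexx.
have ft : fF t = t `^ (- al).
  rewrite /fF; case: ifPn => // t1'.
  have -> : t = 1 by apply/eqP; rewrite eq_le t1 t1'.
  by rewrite powR1.
rewrite ft => lt; have [t' tt' lt'] := cont_rc (powR_cont (p:=- al) t0) lt.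
exists t' => //; rewrite /fF ifN // -ltNge; exact: le_lt_trans tt'.
Qed.

Lemma gF_RC t : 0 < t -> RC gF t.
Proof.
move=> t0 l l0; case: (ltP t c) => tc.
  rewrite /gF tc => lt; exists ((t + c) / 2); first lra.
  by rewrite ifT //; lra.
have ft : gF t = t `^ (- al) by rewrite /gF ifN // -leNgt.
rewrite ft => lt; have [t' tt' lt'] := cont_rc (powR_cont (p:=- al) t0) lt.
exists t' => //; rewrite /gF ifN // -leNgt; apply: le_trans tc (ltW tt').
Qed.

Lemma tf_RC t : 0 < t -> RC tf t.
Proof.
move=> t0 l l0; case: (ltP t c) => tc; last first.
  by rewrite /tf ifN -?leNgt // => /(le_lt_trans l0); rewrite ltxx.
rewrite /tf tc => lt; have [t'' tt'' lt''] := fF_RC t0 l0 lt.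
exists (Num.min t'' ((t + c) / 2)).
  by rewrite lt_min tt'' /=; lra.
have h : Num.min t'' ((t + c) / 2) < c.
  by rewrite gt_min; apply/orP; right; lra.
rewrite h; apply: lt_le_trans lt'' _; apply: fF_dec; by rewrite ge_min lexx.
Qed.

Lemma tg_RC t : 0 < t -> RC tg t.
Proof.
move=> t0 l l0; case: (ltP t c) => tc; last first.
  by rewrite /tg ifN -?leNgt // => /(le_lt_trans l0); rewrite ltxx.
rewrite /tg tc => lt; exists ((t + c) / 2); first lra.
by rewrite ifT //; lra.
Qed.

End Main.

Section Ints.
Variable R : realType.
Local Notation mu := (@lebesgue_measure R).
Variable al : R.
Hypothesis al0 : 0 < al.
Hypothesis al1 : al < 1.

Local Notation a := (1 - al).
Local Notation ia := ((1 - al)^-1).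
Local Notation c := (c al).
Local Notation ca := (ca al).
Local Notation fF := (fF al).
Local Notation gF := (gF al).
Local Notation tf := (tf al).
Local Notation tg := (tg al).

Definition I (h : R -> R) (t : R) := (\int[mu]_(u in `]0%R, t]) (h u)%:E)%E.

Lemma If_le1 t : 0 <= t -> t <= 1 -> I fF t = t%:E.
Proof.
move=> t0 t1; rewrite /I (@int_const _ fF 1 0 t) //.
- by rewrite mul1r subr0.
- exact: (fF_dec al0).
- by move=> u /andP[_ ut]; rewrite /fF ifT // ltW // (lt_le_trans ut).
Qed.

Lemma If_ge1 t : 1 <= t -> I fF t = (1 + (t `^ a - 1) * ia)%:E.
Proof.
move=> t1; rewrite /I (@int_split _ fF 1 t) //; last 2 first.
- exact: (fF_dec al0).
- exact: fF_ge0.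
rewrite -/(I fF 1) If_le1 //.
rewrite (@int_eq_itv _ fF (fun u => u `^ (- al)) 1 t); last first.
  by move=> u /andP[u1 _]; rewrite /fF ifN // -ltNge.
by rewrite int_pow // powR1 -EFinD.
Qed.

Lemma Ig_lec t : 0 <= t -> t <= c -> I gF t = t%:E.
Proof.
move=> t0 t1; rewrite /I (@int_const _ gF 1 0 t) //.
- by rewrite mul1r subr0.
- exact: (gF_dec al0 al1).
- by move=> u /andP[_ ut]; rewrite /gF ifT // (lt_le_trans ut).
Qed.

Lemma Ig_gec t : c <= t -> I gF t = (c + (t `^ a - ca) * ia)%:E.
Proof.
move=> t1; rewrite /I (@int_split _ gF c t) //; last 3 first.
- exact: ltW (c_gt0 al0 al1).
- exact: (gF_dec al0 al1).
- exact: gF_ge0.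
rewrite -/(I gF c) Ig_lec //; last exact: ltW (c_gt0 al0 al1).
rewrite (@int_eq_itv _ gF (fun u => u `^ (- al)) c t); last first.
  by move=> u /andP[u1 _]; rewrite /gF ifN // -leNgt ltW.
by rewrite int_pow // ?(c_gt0 al0 al1) // -EFinD.
Qed.

Lemma Itg_c : I tg c = c%:E.
Proof.
rewrite /I (@int_const _ tg 1 0 c) //.
- by rewrite mul1r subr0.
- exact: ltW (c_gt0 al0 al1).
- exact: tg_dec.
- by move=> u /andP[_ ut]; rewrite /tg ifT.
Qed.

Lemma Itf_le t : (I tf t <= I fF t)%E.
Proof.
apply: ge0_le_integral => //.
- by move=> u _; rewrite lee_fin tf_ge0.
- by apply: meas_h => //; exact: (tf_dec al0).
- by apply: meas_h => //; exact: (fF_dec al0).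
- move=> u _; rewrite lee_fin /tf; case: ifP => // _; exact: fF_ge0.
Qed.

Lemma Itf_gec t : c <= t -> I tf t = I tf c.
Proof.
move=> ct; rewrite /I (@int_split _ tf c t) //; last 3 first.
- exact: ltW (c_gt0 al0 al1).
- exact: (tf_dec al0).
- exact: tf_ge0.
rewrite (@int_const _ tf 0 c t) //; last 2 first.
- exact: (tf_dec al0).
- by move=> u /andP[cu _]; rewrite /tf ifN // -leNgt ltW.
by rewrite mul0r adde0.
Qed.

End Ints.

Section Fin.
Variable R : realType.
Local Notation mu := (@lebesgue_measure R).
Variable al : R.
Hypothesis al0 : 0 < al.
Hypothesis al1 : al < 1.

Local Notation a := (1 - al).
Local Notation ia := ((1 - al)^-1).
Local Notation c := (c al).
Local Notation ca := (ca al).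
Local Notation m := (m al).
Local Notation fF := (fF al).
Local Notation gF := (gF al).
Local Notation tf := (tf al).
Local Notation tg := (tg al).

Lemma a0 : 0 < a. Proof. by rewrite subr_gt0. Qed.
Lemma ia1 : 1 < ia. Proof. by rewrite invf_gt1 ?a0 // ltrBlDr ltrDl. Qed.

Lemma alg (P X Y : R) : 0 < P -> P^-1 * (X + (P - Y) * ia) = ia + (X - Y * ia) / P.
Proof.
move=> P0; have := a0 => a0'; field.
by apply/andP; split; [rewrite gt_eqF | rewrite gt_eqF].
Qed.

Lemma powR_leb (r x y : R) : 0 <= r -> 0 <= x -> x <= y -> x `^ r <= y `^ r.
Proof.
move=> r0 x0 xy; apply: ge0_ler_powR => //; rewrite nnegrE //; exact: le_trans xy.
Qed.

Lemma wf_le (t : R) : 0 < t -> t `^ (al - 1) * (fine (I fF t)) <= ia.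
Proof.
move=> t0; case: (leP t 1) => t1.
  rewrite If_le1 //; last exact: ltW.
  rewrite /= tpow_t //.
  apply: (le_trans (y := 1 `^ al)).
    by apply: powR_leb => //; apply: ltW.
  by rewrite powR1 ltW // ia1.
rewrite If_ge1 //; last exact: ltW.
rewrite /= tpow // alg ?powR_gt0 //.
rewrite gerDl mul1r ler_pdivrMr ?powR_gt0 // mul0r subr_le0; exact: ltW ia1.
Qed.

Lemma wf_lb (v : R) : v < ia -> exists2 u, 0 < u & v <= u `^ (al - 1) * (fine (I fF u)).
Proof.
move=> vi; set d := ia - v; set e := ia - 1.
have d0 : 0 < d by rewrite subr_gt0.
have e0 : 0 < e by rewrite subr_gt0 ia1.
set Q := 1 + e / d.
have Q1 : 1 <= Q by rewrite lerDl divr_ge0 // ltW.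
have Q0 : 0 < Q by apply: lt_le_trans Q1.
set u := Q `^ ia.
have u1 : 1 <= u by apply: (le_trans Q1); apply: le1r_powR; [exact: Q1 | exact: (ltW ia1)].
have ua : u `^ a = Q.
  by rewrite /u -powRrM mulVf ?powRr1 ?ltW // gt_eqF // a0.
exists u; first exact: lt_le_trans u1.
rewrite If_ge1 // /= tpow ?(lt_le_trans ltr01) // alg ?powR_gt0 ?(lt_le_trans ltr01) //.
rewrite ua mul1r.
have : e / Q <= d.
  rewrite ler_pdivrMr // /Q mulrDr mulr1 mulrCA mulfV ?gt_eqF // mulr1.
  by rewrite lerDr ltW.
rewrite /d /e; lra.
Qed.

Lemma wg_lt (t : R) : 0 < t -> t `^ (al - 1) * (fine (I gF t)) < ia.
Proof.
move=> t0; case: (leP t c) => tc.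
  rewrite Ig_lec //; last exact: ltW.
  rewrite /= tpow_t //.
  apply: (le_lt_trans _ (m_lt al0 al1)); rewrite -(cal al0 al1).
  by apply: powR_leb => //; apply: ltW.
rewrite Ig_gec //; last exact: ltW.
rewrite /= tpow // alg ?powR_gt0 //.
rewrite gtrDl pmulr_llt0 ?invr_gt0 ?powR_gt0 // subr_lt0 (cE al0 al1).
by rewrite ltr_pM2l ?(ca_gt0 al0 al1) ?(m_lt al0 al1).
Qed.

Definition M := ca^-1 * (1 + (ca - 1) * ia).
Definition B := Num.max 1 M.

Lemma a_lt1' : a < 1. Proof. by rewrite ltrBlDr ltrDl. Qed.
Lemma ca_ge1 : 1 <= ca.
Proof.
rewrite caE; apply: (le_trans (y := 1 `^ a)); first by rewrite powR1.
apply: powR_leb; [exact: ltW a0 | done | exact: ltW (c_gt1 al0 al1)].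
Qed.

Lemma M_lt : M < m.
Proof.
have ca0 := ca_gt0 al0 al1.
have hb := bern_strict (c_gt1 al0 al1) a0 a_lt1'.
have ia0 : 0 < ia by rewrite invr_gt0 a0.
have h1 : (ca - 1) * ia < c - 1.
  have -> : c - 1 = (a * (c - 1)) * ia by rewrite mulrC mulrA mulVf ?mul1r // gt_eqF // a0.
  by rewrite ltr_pM2r //; rewrite caE; lra.
have h2 : 1 + (ca - 1) * ia < ca * m by rewrite -(cE al0 al1); lra.
rewrite /M; rewrite -(ltr_pM2l ca0) mulrA mulfV ?gt_eqF // mul1r.
exact: h2.
Qed.

Lemma B_lt : B < m.
Proof. by rewrite /B gt_max M_lt (m_gt1 al0 al1). Qed.

Lemma normM_eq (h : R -> R) : (forall x y, x <= y -> h y <= h x) ->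
  (forall x, 0 <= h x) -> (forall u, 0 < u -> RC h u) ->
  normM al h = ereal_sup [set ((t `^ (al - 1))%:E * I h t)%E | t in [set t | 0 < t]].
Proof.
move=> hd h0 rc; rewrite /normM; congr ereal_sup.
by apply/seteqP; split => _ [t t0 <-]; exists t => //; rewrite int_rearr.
Qed.

Lemma fin_I_le (h : R -> R) t (X : R) : (forall x, 0 <= h x) -> 0 < t ->
  (I h t <= X%:E)%E -> t `^ (al - 1) * X <= B ->
  ((t `^ (al - 1))%:E * I h t <= B%:E)%E.
Proof.
move=> h0 t0 hI hX; apply: le_trans (_ : ((t `^ (al - 1))%:E * X%:E <= B%:E)%E).
  apply: lee_pmul => //; first by rewrite lee_fin powR_ge0.
  by apply: integral_ge0 => u _; rewrite lee_fin.
by rewrite -EFinM lee_fin.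
Qed.

Lemma wtf_le (t : R) : 0 < t -> ((t `^ (al - 1))%:E * I tf t <= B%:E)%E.
Proof.
move=> t0; have ca0 := ca_gt0 al0 al1; have c1 := c_gt1 al0 al1.
have ia0 : 0 < ia by rewrite invr_gt0 a0.
have Mle : M <= B by rewrite /B le_max lexx orbT.
case: (leP t 1) => t1.
  apply: (@fin_I_le _ t t) => //; first exact: tf_ge0.
    by rewrite -(If_le1 al0 (ltW t0) t1); apply: Itf_le.
  rewrite tpow_t //; apply: (le_trans (y := 1 `^ al)).
    by apply: powR_leb => //; apply: ltW.
  by rewrite powR1 /B le_max lexx.
have P0 : 0 < t `^ a by rewrite powR_gt0.
case: (leP t c) => tc.
  apply: (@fin_I_le _ t (1 + (t `^ a - 1) * ia)) => //; first exact: tf_ge0.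
    by rewrite -(If_ge1 al0 al1 (ltW t1)); apply: Itf_le.
  rewrite tpow // alg //; apply: le_trans Mle.
  rewrite /M alg // lerD2l !mul1r.
  have hP : t `^ a <= ca by apply: powR_leb; [exact: ltW a0 | exact: ltW | exact: tc].
  have hq : ca^-1 <= (t `^ a)^-1 by rewrite lef_pV2 ?posrE.
  have : 1 - ia <= 0 by rewrite subr_le0 ltW // ia1.
  by nra.
apply: (@fin_I_le _ t (1 + (ca - 1) * ia)) => //; first exact: tf_ge0.
  by rewrite (Itf_gec al0 al1 (ltW tc)) -(If_ge1 al0 al1 (ltW c1)); apply: Itf_le.
rewrite tpow //; apply: le_trans Mle; rewrite /M ler_wpM2r //.
  by rewrite addr_ge0 // mulr_ge0 ?subr_ge0 ?ca_ge1 // ltW.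
have hP : ca <= t `^ a by apply: powR_leb; [exact: ltW a0 | exact: ltW (c_gt0 al0 al1) | exact: ltW].
by rewrite lef_pV2 ?posrE.
Qed.

End Fin.

Section Fin2.
Variable R : realType.
Local Notation mu := (@lebesgue_measure R).
Variable al : R.
Hypothesis al0 : 0 < al.
Hypothesis al1 : al < 1.

Local Notation a := (1 - al).
Local Notation ia := ((1 - al)^-1).
Local Notation c := (c al).
Local Notation fF := (fF al).
Local Notation gF := (gF al).
Local Notation tf := (tf al).
Local Notation tg := (tg al).

Lemma If_fin t : 0 <= t -> I fF t = (fine (I fF t))%:E.
Proof.
move=> t0; case: (leP t 1) => t1; first by rewrite If_le1.
by rewrite If_ge1 // ltW.
Qed.

Lemma Ig_fin t : 0 <= t -> I gF t = (fine (I gF t))%:E.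
Proof.
move=> t0; case: (leP t c) => t1; first by rewrite Ig_lec.
by rewrite Ig_gec // ltW.
Qed.

Lemma pos_meas : measurable [set x : R | 0 < x].
Proof.
have -> : [set x : R | 0 < x] = `]0, +oo[%classic.
  by apply/seteqP; split => x; rewrite /= in_itv /= andbT.
exact: measurable_itv.
Qed.

Lemma normM_f_eq : normM al fF =
  ereal_sup [set ((t `^ (al - 1))%:E * I fF t)%E | t in [set t | 0 < t]].
Proof.
apply: normM_eq; [exact: (fF_dec al0) | exact: fF_ge0 | move=> u u0; exact: fF_RC].
Qed.

Lemma normM_g_eq : normM al gF =
  ereal_sup [set ((t `^ (al - 1))%:E * I gF t)%E | t in [set t | 0 < t]].
Proof.
apply: normM_eq; [exact: (gF_dec al0 al1) | exact: gF_ge0 | move=> u u0; exact: gF_RC].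
Qed.

Lemma inM_f : inM al fF.
Proof.
split; first by apply: nonincreasing_measurable; [exact: pos_meas | move=> x y /(fF_dec al0)].
rewrite normM_f_eq; apply: (le_lt_trans (y := ia%:E)); last exact: ltry.
apply: ge_ereal_sup => _ [t t0 <-]; rewrite (If_fin (ltW t0)) -EFinM lee_fin.
exact: wf_le.
Qed.

Lemma inM_g : inM al gF.
Proof.
split; first by apply: nonincreasing_measurable; [exact: pos_meas | move=> x y /(gF_dec al0 al1)].
rewrite normM_g_eq; apply: (le_lt_trans (y := ia%:E)); last exact: ltry.
apply: ge_ereal_sup => _ [t t0 <-]; rewrite (Ig_fin (ltW t0)) -EFinM lee_fin.
exact: ltW (wg_lt al0 al1 t0).
Qed.

Lemma le_gf : (normM al gF <= normM al fF)%E.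
Proof.
rewrite normM_g_eq; apply: ge_ereal_sup => _ [t t0 <-].
have [u u0 hu] := wf_lb al0 al1 (wg_lt al0 al1 t0).
rewrite (Ig_fin (ltW t0)) -EFinM.
apply: (le_trans (y := ((u `^ (al - 1))%:E * I fF u)%E)).
  by rewrite (If_fin (ltW u0)) -EFinM lee_fin.
rewrite normM_f_eq; apply: ereal_sup_ubound; by exists u.
Qed.

Lemma rf x : 0 < x -> rearr fF x = (fF x)%:E.
Proof. move=> x0; apply: rearr_dec => //; [exact: (fF_dec al0) | exact: fF_ge0 | exact: fF_RC]. Qed.
Lemma rg x : 0 < x -> rearr gF x = (gF x)%:E.
Proof. move=> x0; apply: rearr_dec => //; [exact: (gF_dec al0 al1) | exact: gF_ge0 | exact: gF_RC]. Qed.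

Lemma NP_fg : NP fF gF.
Proof.
exists 1; split => //; split.
  move=> t t0 t1; rewrite rf // rg // lee_fin /fF /gF t1 ifT //.
  exact: le_lt_trans t1 (c_gt1 al0 al1).
move=> t t1; rewrite rf ?(lt_le_trans ltr01) // rg ?(lt_le_trans ltr01) // lee_fin.
have f1 : fF t <= 1 by rewrite /fF; case: ifP => // _; apply: pow_le1.
rewrite /gF; case: ifP => // tc.
rewrite /fF; case: ifPn => // t1'.
have -> : t = 1 by apply/eqP; rewrite eq_le t1 t1'.
by rewrite powR1.
Qed.

Lemma main_neg : ~ M_in_X al.
Proof.
move=> H.
have := H _ _ inM_f inM_g NP_fg le_gf c (c_gt0 al0 al1).
rewrite (@normM_ext _ al (trunc_rearr gF c) tg); last first.
  move=> x x0; rewrite /trunc_rearr /tg x0 /=; case: ifP => // xc.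
  by rewrite rg //= /gF xc.
rewrite (@normM_ext _ al (trunc_rearr fF c) tf); last first.
  move=> x x0; rewrite /trunc_rearr /tf x0 /=; case: ifP => // xc.
  by rewrite rf.
have hub : (normM al tf <= (B al)%:E)%E.
  rewrite (@normM_eq _ al tf); last 3 first.
  - exact: (tf_dec al0).
  - exact: tf_ge0.
  - by move=> u u0; exact: tf_RC.
  apply: ge_ereal_sup => _ [t t0 <-]; exact: wtf_le.
have hlb : ((m al)%:E <= normM al tg)%E.
  rewrite (@normM_eq _ al tg); last 3 first.
  - exact: tg_dec.
  - exact: tg_ge0.
  - by move=> u u0; exact: tg_RC.
  apply: ereal_sup_ubound; exists c; first exact: (c_gt0 al0 al1).
  by rewrite Itg_c // -EFinM tpow_t ?(c_gt0 al0 al1) // cal.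
move=> hle; have := le_trans hlb (le_trans hle hub).
by rewrite lee_fin leNgt (B_lt al0 al1).
Qed.

End Fin2.

Theorem mainTheorem16 (R : realType) (alpha : R) :
  0 < alpha -> alpha < 1 -> ~ M_in_X alpha.
Proof. by move=> a0 a1; apply: main_neg. Qed.
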